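(* Let $\mathbf{s}=(s_n)_{n\geq1}$ be a strictly increasing sequence of positive integers such that $s_n$ divides $s_{n+1}$ for all $n$. Then there exists a continuous injective map $\pi\colon G_{\mathbf{s}}\to\mathbb{R}$ such that the map $f=\pi\circ T_{\mathbf{s}}\circ\pi^{-1}$ on the Cantor set $\pi(G_{\mathbf{s}})$ satisfies $f'(x)=0$ for every $x\in\pi(G_{\mathbf{s}})$.
   Context: For $n\geq1$ let $\pi_n\colon\mathbb{Z}_{s_{n+1}}\to\mathbb{Z}_{s_n}$, $\pi_n(m)=m \bmod s_n$. Let $G_{\mathbf{s}}=\{x\in\prod_{n\geq1}\mathbb{Z}_{s_n}: x_n=\pi_n(x_{n+1})\text{ for all }n\}$ with the product topology (each $\mathbb{Z}_{s_n}$ discrete), and $T_{\mathbf{s}}\colon G_{\mathbf{s}}\to G_{\mathbf{s}}$ given by $T_{\mathbf{s}}(x)_n=x_n+1 \pmod{s_n}$. For $K\subseteq\mathbb{R}$ perfect and $f\colon K\to K$, $f'(x)=\lim_{y\to x,\,y\in K\setminus\{x\}}\frac{f(y)-f(x)}{y-x}$. *)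

(* Defs.v *)
From Stdlib Require Export Reals Arith.
Open Scope R_scope.

(* A sequence s = (s_1, s_2, ...) is represented as s : nat -> nat with
   s 0 = s_1, s 1 = s_2, ... (index shifted by one). *)

Definition inG (s : nat -> nat) (x : nat -> nat) : Prop :=
  forall n : nat, (x n < s n)%nat /\ x n = Nat.modulo (x (S n)) (s n).

Definition odoT (s : nat -> nat) (x : nat -> nat) : nat -> nat :=
  fun n => Nat.modulo (x n + 1) (s n).

(* Continuity of p : G_s -> R for the product topology (discrete factors):
   cylinder sets fixing the first N coordinates form a neighbourhood base. *)
Definition G_continuous (s : nat -> nat) (p : (nat -> nat) -> R) : Prop :=
  forall x, inG s x -> forall eps, 0 < eps ->
    exists N : nat, forall y, inG s y ->
      (forall n, (n < N)%nat -> y n = x n) -> Rabs (p y - p x) < eps.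

Definition G_injective (s : nat -> nat) (p : (nat -> nat) -> R) : Prop :=
  forall x y, inG s x -> inG s y -> p x = p y -> forall n, x n = y n.

Definition image_perfect (s : nat -> nat) (p : (nat -> nat) -> R) : Prop :=
  forall x, inG s x -> forall eps, 0 < eps ->
    exists y, inG s y /\ p y <> p x /\ Rabs (p y - p x) < eps.

(* f = p o T_s o p^{-1} on K = p(G_s) has derivative 0 at every point of K:
   lim_{z -> p x, z in K \ {p x}} (f z - f (p x)) / (z - p x) = 0.
   With z = p y (y in G_s), f z = p (T_s y). *)
Definition conj_deriv_zero (s : nat -> nat) (p : (nat -> nat) -> R) : Prop :=
  forall x, inG s x -> forall eps, 0 < eps ->
    exists delta, 0 < delta /\
      forall y, inG s y -> p y <> p x -> Rabs (p y - p x) < delta ->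
        Rabs ((p (odoT s y) - p (odoT s x)) / (p y - p x)) < eps.

(* Main.v *)
Require Import Defs.
From Coquelicot Require Import Coquelicot.
From Stdlib Require Import Reals Arith Lia Lra.
Open Scope R_scope.

Lemma mod_mod_div (a n d : nat) : Nat.divide d n -> ((a mod n) mod d = a mod d)%nat.
Proof.
  intros [k Hk]. subst n.
  assert (E : a = (a mod (k*d) + (k * (a / (k*d))) * d)%nat).
  { pose proof (Nat.div_mod_eq a (k*d)) as H.
    set (X := (a / (k*d))%nat) in *. set (Y := (a mod (k*d))%nat) in *. lia. }
  rewrite E at 2. rewrite Nat.Div0.mod_add. reflexivity.
Qed.

Lemma mod_char (a b q r : nat) : (r < b)%nat -> a = (b * q + r)%nat -> a mod b = r.
Proof. intros. symmetry. eapply Nat.mod_unique; eauto. Qed.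

Definition psi (s : nat -> nat) (m a : nat) : nat :=
  (a mod s (pred m) + (if a <? s (pred m) then s (pred m) else 0))%nat.

Fixpoint Gf (s : nat -> nat) (m : nat) : nat :=
  match m with
  | O => O
  | S k => (Gf s k + (k+1) * (s (S k) * (2 * s (pred k))) + 1)%nat
  end.

Definition ex (s : nat -> nat) (m b : nat) : nat :=
  (Gf s m + (m+1) * (s (S m) * psi s m (b mod s m) + b))%nat.

Lemma psi_lt s m a : (0 < s (pred m))%nat -> (psi s m a < 2 * s (pred m))%nat.
Proof.
  intros H. unfold psi. destruct (Nat.ltb_spec a (s (pred m))).
  - rewrite Nat.mod_small by lia. lia.
  - pose proof (Nat.mod_upper_bound a (s (pred m))). lia.
Qed.

Lemma ex_lt s m b : (0 < s (pred m))%nat -> (b < s (S m))%nat -> (ex s m b + 1 <= Gf s (S m))%nat.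
Proof.
  intros H1 H2. pose proof (psi_lt s m (b mod s m) H1). unfold ex. simpl Gf.
  set (P := psi s m (b mod s m)) in *. set (S1 := s (S m)) in *. set (S0 := s (pred m)) in *.
  assert (S1 * P + b < S1 * (2 * S0))%nat.
  { assert (S1 * (P + 1) <= S1 * (2*S0))%nat by (apply Nat.mul_le_mono_l; lia).
    rewrite Nat.mul_add_distr_l in H0. lia. }
  assert ((m+1) * (S1 * P + b) < (m+1) * (S1 * (2 * S0)))%nat by (apply Nat.mul_lt_mono_pos_l; lia).
  lia.
Qed.

Lemma Gf_mono s m n : (Gf s m + n <= Gf s (m + n))%nat.
Proof. induction n. rewrite !Nat.add_0_r; lia. replace (m + S n)%nat with (S (m+n)) by lia. simpl Gf. lia. Qed.

Lemma Gf_le s m n : (m <= n)%nat -> (Gf s m <= Gf s n)%nat.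
Proof. intros H. replace n with (m + (n - m))%nat by lia. pose proof (Gf_mono s m (n-m)). lia. Qed.

Lemma Gf_ge_n s n : (n <= Gf s n)%nat.
Proof. pose proof (Gf_mono s 0 n). simpl in H. lia. Qed.

Lemma ex_ge s m b : (Gf s m <= ex s m b)%nat.
Proof. unfold ex. lia. Qed.

Lemma ex_inj s m b1 b2 : (b1 < s (S m))%nat -> (b2 < s (S m))%nat -> ex s m b1 = ex s m b2 -> b1 = b2.
Proof.
  unfold ex. intros H1 H2 He.
  set (u := psi s m (b1 mod s m)) in *. set (v := psi s m (b2 mod s m)) in *.
  assert (E : (s (S m) * u + b1 = s (S m) * v + b2)%nat).
  { apply (Nat.mul_cancel_l _ _ (m+1)); lia. }
  destruct (lt_eq_lt_dec u v) as [[Hl|Hl]|Hl].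
  - assert (s (S m) * (u+1) <= s (S m) * v)%nat by (apply Nat.mul_le_mono_l; lia).
    rewrite Nat.mul_add_distr_l in H. lia.
  - subst. lia.
  - assert (s (S m) * (v+1) <= s (S m) * u)%nat by (apply Nat.mul_le_mono_l; lia).
    rewrite Nat.mul_add_distr_l in H. lia.
Qed.

Definition addc (s : nat -> nat) (x : nat -> nat) (c : nat) : nat -> nat :=
  fun n => ((x n + c) mod s n)%nat.

Lemma inG_add s x c : (forall n, (0 < s n)%nat) -> (forall n, Nat.divide (s n) (s (S n))) ->
  inG s x -> inG s (addc s x c).
Proof.
  intros hpos hdiv hx n. unfold addc. split.
  - apply Nat.mod_upper_bound. specialize (hpos n). lia.
  - rewrite mod_mod_div by apply hdiv. destruct (hx n) as [_ E]. rewrite E.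
    now rewrite Nat.Div0.add_mod_idemp_l.
Qed.

Lemma div_le s k j : (forall n, Nat.divide (s n) (s (S n))) -> (k <= j)%nat -> Nat.divide (s k) (s j).
Proof.
  intros hdiv H. induction H. apply Nat.divide_refl. eapply Nat.divide_trans; eauto.
Qed.

Lemma inG_low s z k j : (forall n, Nat.divide (s n) (s (S n))) -> inG s z -> (k <= j)%nat -> z k = (z j mod s k)%nat.
Proof.
  intros hdiv hz H. induction H.
  - symmetry. apply Nat.mod_small. apply hz.
  - rewrite IHle. destruct (hz m) as [_ E]. rewrite E. apply mod_mod_div. now apply div_le.
Qed.

Lemma add_ne s x m : (forall n, (0 < s n)%nat) -> (forall n, (s n < s (S n))%nat) -> inG s x ->
  x (S m) <> addc s x (s m) (S m).
Proof.
  intros hpos hinc hx. unfold addc. destruct (hx (S m)) as [Hl _]. specialize (hinc m). specialize (hpos m).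
  destruct (Nat.ltb_spec (x (S m) + s m) (s (S m))).
  - rewrite Nat.mod_small by lia. lia.
  - rewrite (mod_char _ _ 1 (x (S m) + s m - s (S m))) by lia. lia.
Qed.

Lemma add_agree s x m n : (forall n, Nat.divide (s n) (s (S n))) -> inG s x -> (n <= m)%nat ->
  addc s x (s m) n = x n.
Proof.
  intros hdiv hx H. unfold addc. destruct (div_le s n m hdiv H) as [k Hk]. rewrite Hk.
  rewrite Nat.Div0.mod_add. apply Nat.mod_small. apply hx.
Qed.

Lemma mod_succ a S : ((a+1) mod S <> 0)%nat -> ((a+1) mod S = a mod S + 1)%nat.
Proof.
  intros H. destruct (Nat.eq_dec S 0) as [->|HS]. { simpl in *. lia. }
  pose proof (Nat.div_mod_eq a S). pose proof (Nat.mod_upper_bound a S HS).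
  set (r := (a mod S)%nat) in *. set (q := (a / S)%nat) in *.
  destruct (Nat.ltb_spec (r+1) S).
  - apply (mod_char _ _ q); lia.
  - exfalso. apply H. apply (mod_char _ _ (q+1)); lia.
Qed.

Lemma psi_step s k a : (0 < s k)%nat -> Nat.divide (s k) (s (S k)) -> (s k < s (S k))%nat ->
  (a < s (S k))%nat ->
  ~ ((((a+1) mod s (S k)) mod s k = 0)%nat /\ ((a+1) mod s (S k) <> 0)%nat) ->
  (psi s (S k) a + 1 <= psi s (S k) ((a+1) mod s (S k)))%nat.
Proof.
  intros H0 [j Hj] Hlt Ha Hn. unfold psi. simpl pred.
  destruct (Nat.eq_dec (a+1) (s (S k))) as [E|E].
  - rewrite E, Nat.Div0.mod_same. rewrite Nat.Div0.mod_0_l.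
    destruct (Nat.ltb_spec 0 (s k)); [|lia].
    destruct (Nat.ltb_spec a (s k)); [lia|].
    destruct j as [|j]. { simpl in Hj. lia. }
    simpl in Hj. rewrite (mod_char _ _ j (s k - 1)); lia.
  - rewrite (Nat.mod_small (a+1)) in * by lia.
    assert (Hm : ((a+1) mod s k <> 0)%nat) by (intro; apply Hn; split; [assumption|lia]).
    rewrite (mod_succ a (s k) Hm).
    destruct (Nat.ltb_spec a (s k)); destruct (Nat.ltb_spec (a+1) (s k)); try lia.
    exfalso. apply Hm. replace (a+1)%nat with (s k) by lia. apply Nat.Div0.mod_same.
Qed.

Lemma bad_finite s z : (forall n, (0 < s n)%nat) -> (forall n, Nat.divide (s n) (s (S n))) -> inG s z ->
  exists M0, forall k, (M0 <= k)%nat -> ~ (z k = 0%nat /\ z (S k) <> 0%nat).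
Proof.
  intros hpos hdiv hz.
  destruct (Classical_Prop.classic (exists j, z j <> 0%nat)) as [[j Hj]|Hn].
  - exists j. intros k Hk [E1 E2]. apply Hj. rewrite (inG_low s z j k hdiv hz Hk), E1.
    apply Nat.Div0.mod_0_l.
  - exists 0%nat. intros k _ [_ E]. apply Hn. eauto.
Qed.

Lemma least_ex (P : nat -> Prop) : (forall n, P n \/ ~ P n) -> (exists n, P n) ->
  exists m, P m /\ forall k, (k < m)%nat -> ~ P k.
Proof.
  intros dec [n Hn]. revert Hn. induction n as [n IH] using (well_founded_induction lt_wf).
  intros Hn. destruct (Classical_Prop.classic (exists k, (k < n)%nat /\ P k)) as [[k [Hk Pk]]|H].
  - exact (IH k Hk Pk).
  - exists n. split; auto. intros k Hk Pk. apply H; eauto.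
Qed.

Definition q : R := / 4.
Definition tt (s : nat -> nat) (x : nat -> nat) (n : nat) : R := q ^ ex s n (x (S n)).
Definition TT (s : nat -> nat) (x : nat -> nat) (m : nat) : R := Series (fun k => tt s x (m + k)).

Lemma q_pos n : 0 < q ^ n.
Proof. apply pow_lt. unfold q. lra. Qed.

Lemma q_le1 n : q ^ n <= 1.
Proof. induction n; simpl. lra. pose proof (q_pos n). unfold q in *. nra. Qed.

Lemma q_mono a b : (a <= b)%nat -> q ^ b <= q ^ a.
Proof.
  intros H. replace b with (a + (b - a))%nat by lia. rewrite pow_add.
  pose proof (q_pos a). pose proof (q_le1 (b - a)). pose proof (q_pos (b-a)). nra.
Qed.

Lemma q_S n : q ^ S n = q ^ n / 4.
Proof. simpl. unfold q. field. Qed.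

Lemma geomS c : is_series (fun k => c * q ^ k) (c * (4/3)).
Proof.
  assert (H : is_series (fun k => q ^ k) (4/3)).
  { replace (4/3) with (/ (1 - q)) by (unfold q; field). apply is_series_geom.
    unfold q. rewrite Rabs_pos_eq; lra. }
  exact (is_series_scal_l c _ _ H).
Qed.

Lemma tt_bound s x m k : 0 < tt s x (m + k) <= q ^ Gf s m * q ^ k.
Proof.
  unfold tt. split. apply q_pos. rewrite <- pow_add. apply q_mono.
  pose proof (ex_ge s (m+k) (x (S (m+k)))). pose proof (Gf_mono s m k). lia.
Qed.

Lemma ex_tail s x m : ex_series (fun k => tt s x (m + k)).
Proof.
  apply (@ex_series_le R_AbsRing R_CompleteNormedModule _ (fun k => q ^ Gf s m * q ^ k)).
  - intros k. change (norm (tt s x (m + k))) with (Rabs (tt s x (m + k))).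
    pose proof (tt_bound s x m k). rewrite Rabs_pos_eq; lra.
  - eexists. apply geomS.
Qed.

Lemma TT_bounds s x m : 0 <= TT s x m <= 4/3 * q ^ Gf s m.
Proof.
  split.
  - replace 0 with (Series (fun k:nat => 0 * q ^ k)).
    + apply Series_le. intros k. pose proof (tt_bound s x m k). pose proof (q_pos k). lra.
      apply ex_tail.
    + rewrite (is_series_unique _ _ (geomS 0)). lra.
  - replace (4/3 * q ^ Gf s m) with (Series (fun k => q ^ Gf s m * q ^ k)).
    + apply Series_le. intros k. pose proof (tt_bound s x m k). lra.
      eexists. apply geomS.
    + rewrite (is_series_unique _ _ (geomS _)). lra.
Qed.

Lemma TT_step s x m : TT s x m = tt s x m + TT s x (S m).
Proof.
  unfold TT. rewrite Series_incr_1 by apply ex_tail. rewrite Nat.add_0_r. f_equal.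
  apply Series_ext. intros k. f_equal. lia.
Qed.

Lemma TT_agree s x y m : (forall n, (n < m)%nat -> x (S n) = y (S n)) ->
  TT s x 0 - TT s y 0 = TT s x m - TT s y m.
Proof.
  induction m; intros H. reflexivity.
  rewrite IHm by (intros; apply H; lia).
  rewrite (TT_step s x m), (TT_step s y m). unfold tt. rewrite (H m) by lia. ring.
Qed.

Lemma TT_ext s x y : (forall n, x (S n) = y (S n)) -> TT s x 0 = TT s y 0.
Proof. intros H. unfold TT. apply Series_ext. intros k. unfold tt. now rewrite H. Qed.

Lemma LB s x y m U : (0 < s (pred m))%nat ->
  (x (S m) < s (S m))%nat -> (y (S m) < s (S m))%nat ->
  (forall n, (n < m)%nat -> x (S n) = y (S n)) -> x (S m) <> y (S m) ->
  (ex s m (x (S m)) <= U)%nat -> (ex s m (y (S m)) <= U)%nat ->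
  5/12 * q ^ U <= Rabs (TT s x 0 - TT s y 0).
Proof.
  intros H0 Hx Hy Hag Hne HU1 HU2. rewrite (TT_agree s x y m Hag).
  rewrite (TT_step s x m), (TT_step s y m). unfold tt.
  pose proof (ex_lt s m _ H0 Hx). pose proof (ex_lt s m _ H0 Hy).
  pose proof (TT_bounds s x (S m)). pose proof (TT_bounds s y (S m)).
  set (ea := ex s m (x (S m))) in *. set (eb := ex s m (y (S m))) in *.
  assert (ea <> eb) by (intro E; apply Hne; eapply ex_inj; eauto).
  destruct (Nat.lt_gt_cases ea eb) as [[Hl|Hl] _]; [assumption| |].
  - pose proof (q_mono _ _ Hl). rewrite q_S in H5.
    assert (q ^ Gf s (S m) <= q ^ S ea) by (apply q_mono; lia). rewrite q_S in H6.
    pose proof (q_mono _ _ HU1). pose proof (q_pos eb).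
    rewrite Rabs_pos_eq; lra.
  - pose proof (q_mono _ _ Hl). rewrite q_S in H5.
    assert (q ^ Gf s (S m) <= q ^ S eb) by (apply q_mono; lia). rewrite q_S in H6.
    pose proof (q_mono _ _ HU2). pose proof (q_pos ea).
    rewrite Rabs_left1; lra.
Qed.

Lemma UB s x y m : (forall n, (n < m)%nat -> x (S n) = y (S n)) ->
  Rabs (TT s x 0 - TT s y 0) <= 8/3 * q ^ Gf s m.
Proof.
  intros Hag. rewrite (TT_agree s x y m Hag).
  pose proof (TT_bounds s x m). pose proof (TT_bounds s y m).
  apply Rabs_le. lra.
Qed.

Lemma UB2 s x y m L : (forall n, (n < m)%nat -> x (S n) = y (S n)) ->
  (L <= ex s m (x (S m)))%nat -> (L <= ex s m (y (S m)))%nat -> (L <= Gf s (S m))%nat ->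
  Rabs (TT s x 0 - TT s y 0) <= 14/3 * q ^ L.
Proof.
  intros Hag H1 H2 H3. rewrite (TT_agree s x y m Hag).
  rewrite (TT_step s x m), (TT_step s y m). unfold tt.
  pose proof (TT_bounds s x (S m)). pose proof (TT_bounds s y (S m)).
  pose proof (q_mono _ _ H1). pose proof (q_mono _ _ H2). pose proof (q_mono _ _ H3).
  pose proof (q_pos (ex s m (x (S m)))). pose proof (q_pos (ex s m (y (S m)))).
  apply Rabs_le. lra.
Qed.

Lemma first_diff (x y : nat -> nat) : (exists n, x (S n) <> y (S n)) ->
  exists m, x (S m) <> y (S m) /\ forall k, (k < m)%nat -> x (S k) = y (S k).
Proof.
  intros H. destruct (least_ex (fun n => x (S n) <> y (S n))) as [m [Hm Hk]].
  - intros n. apply Classical_Prop.classic.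
  - exact H.
  - exists m. split; auto. intros k Hk'. destruct (Nat.eq_dec (x (S k)) (y (S k))); auto.
    exfalso. exact (Hk k Hk' n).
Qed.

Lemma small_q (e : R) : 0 < e -> exists N, forall n, (N <= n)%nat -> q ^ n < e.
Proof.
  intros He. destruct (pow_lt_1_zero q) with (y := e) as [N HN]; auto.
  unfold q; rewrite Rabs_pos_eq; lra.
  exists N. intros n Hn. specialize (HN n Hn). rewrite Rabs_pos_eq in HN; auto.
  left; apply q_pos.
Qed.

Theorem theorem3p1 (s : nat -> nat)
  (hpos : forall n : nat, (0 < s n)%nat)
  (hinc : forall n : nat, (s n < s (S n))%nat)
  (hdiv : forall n : nat, Nat.divide (s n) (s (S n))) :
  exists p : (nat -> nat) -> R,
    G_continuous s p /\ G_injective s p /\ image_perfect s p /\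
    conj_deriv_zero s p.
Proof.
  assert (hp : forall m, (0 < s (pred m))%nat) by (intros; apply hpos).
  exists (fun x => TT s x 0). split; [|split; [|split]].
  -
    intros x hx eps heps. destruct (small_q (3/8 * eps)) as [N0 HN0]; [lra|].
    exists (S N0). intros y hy Hag.
    eapply Rle_lt_trans. apply (UB s y x N0). intros n Hn. apply Hag. lia.
    pose proof (q_mono _ _ (Gf_ge_n s N0)). specialize (HN0 N0 (le_n _)). lra.
  -
    intros x y hx hy He n. destruct (Nat.eq_dec (x n) (y n)) as [|Hne]; auto. exfalso.
    destruct (first_diff x y) as [m [Hm Hk]].
    { destruct n as [|n].
      - exists 0%nat. intros E. apply Hne. rewrite (proj2 (hx 0%nat)), (proj2 (hy 0%nat)), E. reflexivity.
      - exists n. exact Hne. }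
    pose proof (LB s x y m _ (hp m) (proj1 (hx (S m))) (proj1 (hy (S m))) Hk Hm (Nat.le_max_l _ _) (Nat.le_max_r _ _)).
    rewrite He, Rminus_diag, Rabs_R0 in H. pose proof (q_pos (Nat.max (ex s m (x (S m))) (ex s m (y (S m))))). lra.
  -
    intros x hx eps heps. destruct (small_q (3/8 * eps)) as [m Hm]; [lra|].
    exists (addc s x (s m)). pose proof (inG_add s x (s m) hpos hdiv hx) as hy.
    assert (Hag : forall n, (n < m)%nat -> addc s x (s m) (S n) = x (S n)).
    { intros n Hn. apply add_agree; auto. }
    assert (Hne : addc s x (s m) (S m) <> x (S m)).
    { intros E. apply (add_ne s x m hpos hinc hx). auto. }
    split; [exact hy| split].
    + intros E.
      pose proof (LB s _ x m _ (hp m) (proj1 (hy (S m))) (proj1 (hx (S m))) Hag Hne (Nat.le_max_l _ _) (Nat.le_max_r _ _)).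
      rewrite E, Rminus_diag, Rabs_R0 in H. pose proof (q_pos (Nat.max (ex s m (addc s x (s m) (S m))) (ex s m (x (S m))))). lra.
    + eapply Rle_lt_trans. apply (UB s _ x m Hag).
      pose proof (q_mono _ _ (Gf_ge_n s m)). specialize (Hm m (le_n _)). lra.
  -
    intros x hx eps heps.
    set (z := addc s x 1).
    assert (hz : inG s z) by (apply inG_add; auto).
    destruct (bad_finite s z hpos hdiv hz) as [M0 HM0].
    destruct (small_q (5/56 * eps)) as [N1 HN1]; [lra|].
    set (M := S (M0 + N1)).
    exists (5/12 * q ^ Gf s M). split. { pose proof (q_pos (Gf s M)). lra. }
    intros y hy Hpne Hd. cbv beta in *.
    destruct (first_diff y x) as [m [Hm Hk]].
    { destruct (Classical_Prop.classic (exists n, y (S n) <> x (S n))) as [H|H]; auto.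
      exfalso. apply Hpne. apply TT_ext. intros n. destruct (Nat.eq_dec (y (S n)) (x (S n))); auto.
      exfalso; eauto. }
    assert (HmM : (M <= m)%nat).
    { destruct (Nat.le_gt_cases M m) as [|Hlt]; auto. exfalso.
      pose proof (ex_lt s m _ (hp m) (proj1 (hy (S m)))).
      pose proof (ex_lt s m _ (hp m) (proj1 (hx (S m)))).
      pose proof (LB s y x m (Gf s (S m)) (hp m) (proj1 (hy (S m))) (proj1 (hx (S m))) Hk Hm ltac:(lia) ltac:(lia)).
      pose proof (q_mono _ _ (Gf_le s (S m) M ltac:(lia))). lra. }
    destruct m as [|k]. { unfold M in HmM. lia. }
    set (m := S k) in *.
    assert (Ha : y m = x m) by (apply Hk; unfold m; lia).
    set (Ty := addc s y 1). assert (hTy : inG s Ty) by (apply inG_add; auto).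
    assert (HagT : forall n, (n < m)%nat -> Ty (S n) = z (S n)).
    { intros n Hn. unfold Ty, z, addc. rewrite Hk by lia. reflexivity. }
    assert (Hzm : (z (S m) mod s m = z m)%nat) by (symmetry; apply hz).
    assert (HTym : (Ty (S m) mod s m = z m)%nat).
    { rewrite <- (proj2 (hTy m)). unfold Ty, z, addc. rewrite Ha. reflexivity. }
    set (L := (Gf s m + (m+1) * (s (S m) * psi s m (z m)))%nat).
    set (U := (Gf s m + (m+1) * (s (S m) * psi s m (x m) + (s (S m) - 1)))%nat).
    assert (HL1 : (L <= ex s m (z (S m)))%nat) by (unfold ex; rewrite Hzm; unfold L; nia).
    assert (HL2 : (L <= ex s m (Ty (S m)))%nat) by (unfold ex; rewrite HTym; unfold L; nia).
    assert (HL3 : (L <= Gf s (S m))%nat).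
    { pose proof (ex_lt s m _ (hp m) (proj1 (hz (S m)))). lia. }
    assert (Hxm : (x (S m) mod s m = x m)%nat) by (symmetry; apply hx).
    assert (Hym : (y (S m) mod s m = x m)%nat) by (rewrite <- Ha; symmetry; apply hy).
    assert (HU1 : (ex s m (x (S m)) <= U)%nat).
    { unfold ex. rewrite Hxm. unfold U. pose proof (proj1 (hx (S m))).
      apply Nat.add_le_mono_l, Nat.mul_le_mono_l. lia. }
    assert (HU2 : (ex s m (y (S m)) <= U)%nat).
    { unfold ex. rewrite Hym. unfold U. pose proof (proj1 (hy (S m))).
      apply Nat.add_le_mono_l, Nat.mul_le_mono_l. lia. }
    assert (Hpsi : (psi s m (x m) + 1 <= psi s m (z m))%nat).
    { unfold m. assert (E : z (S k) = ((x (S k) + 1) mod s (S k))%nat) by reflexivity.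
      rewrite E. apply psi_step; auto. apply hx.
      rewrite <- E. assert (E2 : (z (S k) mod s k = z k)%nat) by (symmetry; apply hz).
      rewrite E2. apply HM0. unfold M in HmM. lia. }
    assert (HLU : (U + (m + 1) <= L)%nat).
    { unfold U, L. set (P := psi s m (x m)) in *. set (Q := psi s m (z m)) in *.
      set (sS := s (S m)) in *. assert (0 < sS)%nat by apply hpos.
      assert (sS * (P + 1) <= sS * Q)%nat by (apply Nat.mul_le_mono_l; lia).
      assert ((m+1) * (sS * P + sS) <= (m+1) * (sS * Q))%nat.
      { apply Nat.mul_le_mono_l. rewrite Nat.mul_add_distr_l in H0. lia. }
      assert ((m+1) * (sS * P + sS) = (m+1) * (sS * P + (sS - 1)) + (m+1))%nat.
      { replace (sS * P + sS)%nat with (sS * P + (sS - 1) + 1)%nat at 1 by lia. ring. }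
      lia. }
    pose proof (UB2 s Ty z m L HagT HL2 HL1 HL3) as HA.
    pose proof (LB s y x m U (hp m) (proj1 (hy (S m))) (proj1 (hx (S m))) Hk Hm HU2 HU1) as HB.
    change (odoT s y) with Ty. change (odoT s x) with z.
    set (A := TT s Ty 0 - TT s z 0) in *. set (B := TT s y 0 - TT s x 0) in *.
    assert (HqL : q ^ L <= q ^ U * q ^ (m + 1)).
    { rewrite <- pow_add. apply q_mono. exact HLU. }
    assert (Hqm : q ^ (m+1) < 5/56 * eps) by (apply HN1; unfold M in HmM; lia).
    pose proof (q_pos U). pose proof (q_pos (m+1)).
    assert (HBpos : 0 < Rabs B) by lra.
    unfold Rdiv. rewrite Rabs_mult, Rabs_inv.
    assert (HA2 : Rabs A < eps * Rabs B).
    { apply Rle_lt_trans with (14/3 * (q ^ U * q ^ (m+1))). lra.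
      apply Rlt_le_trans with (14/3 * (q ^ U * (5/56 * eps))).
      apply Rmult_lt_compat_l. lra. apply Rmult_lt_compat_l; lra.
      nra. }
    apply Rmult_lt_reg_r with (Rabs B); auto.
    rewrite Rmult_assoc, Rinv_l by lra. lra.
Qed.
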